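(* Let $\mathcal{K}$ be a simplicial complex of dimension at most $2$ with non-negatively weighted edges, let $g=\operatorname{rank}\mathsf{H}_1(\mathcal{K})$ and $L=\operatorname{rank}\mathsf{Z}_1(\mathcal{K})$. Let $\mathcal{G}'$ be a set of $1$-cycles such that there exists a minimal cycle basis $\Gamma^*=\{\gamma^*_1,\dots,\gamma^*_L\}$ of the $1$-skeleton of $\mathcal{K}$ with the property that for each $1\le i\le L$ there is a subset $\Gamma_i\subseteq\mathcal{G}'$ with $\gamma^*_i=\sum_{\gamma\in\Gamma_i}\gamma$ and $\mathcal{S}(\gamma)\le 2\mathcal{S}(\gamma^*_i)$ for every $\gamma\in\Gamma_i$. Then there exists a minimal homology basis $\mathcal{C}^*=\{C^*_1,\dots,C^*_g\}$ of $\mathsf{H}_1(\mathcal{K})$ such that $\mathcal{G}'$ contains $g$ cycles $A_1,\dots,A_g$ with (i) $[A_1],\dots,[A_g]$ forming a homology basis, and (ii) $\mathcal{S}(A_i)\le 2\mathcal{S}(C^*_i)$ for $i=1,\dots,g$.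
   Context: All chains, cycles and homology are over $\mathbb{Z}_2$; sums of cycles are $\mathbb{Z}_2$-sums of edge sets. The size $\mathcal{S}(C)$ of a $1$-cycle is the total weight of its edges. A cycle basis of the $1$-skeleton is a set of $L$ cycles forming a basis of the cycle space $\mathsf{Z}_1$; it is minimal if its total size is smallest among all cycle bases. A homology basis is a set of $g$ cycles whose classes form a basis of $\mathsf{H}_1(\mathcal{K})$; it is minimal if its total size is smallest among all homology bases. *)

(* Defs.v *)
From HB Require Import structures.
From mathcomp Require Import all_boot all_order all_algebra.
Set Implicit Arguments. Unset Strict Implicit. Unset Printing Implicit Defensive.
Import Order.TTheory GRing.Theory Num.Theory.
Local Open Scope ring_scope.

(* A simplicial complex of dimension <= 2 on the finite vertex type V:
   edges are 2-element vertex sets, triangles 3-element vertex sets, and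
   every 2-element subset of a triangle is an edge (closure under faces;
   all vertices of V are 0-simplices). *)
Record complex2 (V : finType) := Complex2 {
  edges : {set {set V}};
  tris  : {set {set V}};
  edges_card : forall e, e \in edges -> #|e| = 2%N;
  tris_card  : forall t, t \in tris -> #|t| = 3%N;
  tris_faces : forall t e : {set V}, t \in tris -> e \subset t -> #|e| = 2%N -> e \in edges
}.

(* 1-chains over Z_2 = sets of edges; 2-chains = sets of triangles. *)
Definition chain (V : finType) := {set {set V}}.

Definition zsum (V I : finType) (f : I -> chain V) (S : {set I}) : chain V :=
  [set e | odd #|[set i in S | e \in f i]|].

Definition zsumset (V : finType) (G : {set chain V}) : chain V :=
  [set e | odd #|[set c in G | e \in c]|].

Definition cadd (V : finType) (a b : chain V) : chain V := (a :\: b) :|: (b :\: a).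

Definition is_cycle (V : finType) (K : complex2 V) (c : chain V) : Prop :=
  c \subset edges K /\ forall v : V, ~~ odd #|[set e in c | v \in e]|.

Definition bd2 (V : finType) (K : complex2 V) (T : chain V) : chain V :=
  [set e in edges K | odd #|[set t in T | e \subset t]|].

Definition is_boundary (V : finType) (K : complex2 V) (c : chain V) : Prop :=
  exists T : chain V, T \subset tris K /\ c = bd2 K T.

Definition csize (R : realFieldType) (V : finType) (w : {set V} -> R)
  (c : chain V) : R := \sum_(e in c) w e.

Definition total_size (R : realFieldType) (V : finType) (w : {set V} -> R)
  (n : nat) (f : 'I_n -> chain V) : R := \sum_(i < n) csize w (f i).

Definition cycle_basis (V : finType) (K : complex2 V) (n : nat)
  (f : 'I_n -> chain V) : Prop :=
  [/\ forall i, is_cycle K (f i),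
      forall S : {set 'I_n}, zsum f S = set0 -> S = set0 &
      forall z, is_cycle K z -> exists S : {set 'I_n}, z = zsum f S].

Definition min_cycle_basis (R : realFieldType) (V : finType) (K : complex2 V)
  (w : {set V} -> R) (n : nat) (f : 'I_n -> chain V) : Prop :=
  cycle_basis K f /\
  forall (m : nat) (f' : 'I_m -> chain V), cycle_basis K f' ->
    total_size w f <= total_size w f'.

Definition homology_basis (V : finType) (K : complex2 V) (n : nat)
  (f : 'I_n -> chain V) : Prop :=
  [/\ forall i, is_cycle K (f i),
      forall S : {set 'I_n}, is_boundary K (zsum f S) -> S = set0 &
      forall z, is_cycle K z -> exists S : {set 'I_n}, exists b,
        is_boundary K b /\ z = cadd (zsum f S) b].

Definition min_homology_basis (R : realFieldType) (V : finType) (K : complex2 V)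
  (w : {set V} -> R) (n : nat) (f : 'I_n -> chain V) : Prop :=
  homology_basis K f /\
  forall (m : nat) (f' : 'I_m -> chain V), homology_basis K f' ->
    total_size w f <= total_size w f'.

(* Main.v *)
Require Import Defs.
From mathcomp Require Import all_boot all_order all_algebra.
From mathcomp Require Import zify.
Import Order.TTheory GRing.Theory Num.Theory.
Local Open Scope ring_scope.

Lemma F2_cases (x : 'F_2) : x = 0 \/ x = 1.
Proof. case: x => [[|[|m]]] // H; [left|right]; exact/val_inj. Qed.
Lemma F2_11 : (1 + 1 : 'F_2) = 0. Proof. by apply/val_inj. Qed.
Lemma F2_10 : (1 : 'F_2) != 0. Proof. by []. Qed.

Lemma F2_nat n : (n%:R : 'F_2) = (odd n)%:R.
Proof.
elim: n => // n IH; rewrite mulrS IH /=.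
by case: (odd n) => //=; rewrite ?F2_11 ?addr0.
Qed.

Lemma F2_bool (b : bool) : ((b%:R : 'F_2) != 0) = b.
Proof. by case: b. Qed.

Lemma F2_sum_card (T : finType) (P : {pred T}) (b : pred T) :
  \sum_(i in P) ((b i)%:R : 'F_2) = (odd #|[set i in P | b i]|)%:R.
Proof.
rewrite -F2_nat -sumr_const big_mkcond /= [RHS]big_mkcond /=.
apply: eq_bigr => i _; rewrite !inE.
by case: (i \in P); case: (b i).
Qed.

Section Vec.
Variable V : finType.
Local Notation N := #|{: {set V}}|.
Local Notation chain := (chain V).

Definition vec (c : chain) : 'rV['F_2]_N := \row_(i < N) ((enum_val i \in c)%:R).
Definition unvec (v : 'rV['F_2]_N) : chain := [set e | v 0 (enum_rank e) != 0].


Lemma vecK : cancel vec unvec.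
Proof. by move=> c; apply/setP => e; rewrite inE mxE enum_rankK F2_bool. Qed.

Lemma unvecK : cancel unvec vec.
Proof.
move=> v; apply/rowP => i; rewrite mxE inE enum_valK.
by case: (F2_cases (v 0 i)) => ->.
Qed.

Lemma vec_inj : injective vec. Proof. exact: can_inj vecK. Qed.

Lemma vec0 : vec set0 = 0.
Proof. by apply/rowP => i; rewrite !mxE inE. Qed.

Lemma vec_eq0 c : (vec c == 0) = (c == set0).
Proof. by apply/eqP/eqP => [|->]; [rewrite -vec0; apply: vec_inj | exact: vec0]. Qed.

Lemma vec_cadd a b : vec (cadd a b) = vec a + vec b.
Proof.
apply/rowP => i; rewrite !mxE !inE.
by case: (enum_val i \in a); case: (enum_val i \in b); rewrite ?F2_11 ?addr0 ?add0r.
Qed.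

Lemma vec_zsum (I : finType) (f : I -> chain) (S : {set I}) :
  vec (zsum f S) = \sum_(i in S) vec (f i).
Proof.
apply/rowP => j; rewrite !mxE summxE inE.
rewrite (eq_bigr (fun i => ((enum_val j \in f i)%:R : 'F_2))); last by move=> i _; rewrite mxE.
by rewrite F2_sum_card.
Qed.

Lemma sum_enum_val (b : pred {set V}) :
  \sum_(i < N) ((b (enum_val i))%:R : 'F_2) = (odd #|[set e | b e]|)%:R.
Proof.
rewrite -(@F2_sum_card _ predT) (reindex enum_rank) /=; last first.
  by exists enum_val => x _; rewrite ?enum_rankK ?enum_valK.
by apply: eq_bigr => e _; rewrite enum_rankK.
Qed.

End Vec.
Arguments vec {V}.
Arguments unvec {V}.

Section Cx.
Variables (V : finType) (K : complex2 V).
Local Notation N := #|{: {set V}}|.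
Local Notation chain := (chain V).

Definition Dv : 'M['F_2]_(N, #|{: V}|) :=
  \matrix_(i, x) ((enum_val x \in (enum_val i : {set V}))%:R).
Definition Ne : 'M['F_2]_N :=
  diag_mx (\row_j (((enum_val j : {set V}) \notin edges K)%:R)).
Definition Zk : 'M['F_2]_N := kermx (row_mx Dv Ne).
Definition Bd : 'M['F_2]_N :=
  \matrix_(i, j) ((((enum_val j : {set V}) \in edges K) &&
     (enum_val j \subset (enum_val i : {set V})) && (enum_val i \in tris K))%:R).

Lemma F2_mulb (a b : bool) : (a%:R * b%:R : 'F_2) = (a && b)%:R.
Proof. by case: a; case: b; rewrite ?mul1r ?mul0r. Qed.

Lemma cycleE c : is_cycle K c <-> (vec c <= Zk)%MS.
Proof.
rewrite /Zk sub_kermx mul_mx_row row_mx_eq0 /is_cycle.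
have -> : (vec c *m Ne == 0) = (c \subset edges K).
  rewrite /Ne mul_mx_diag; apply/eqP/subsetP => [H e ec|H].
    move/matrixP: H => /(_ 0 (enum_rank e)); rewrite !mxE enum_rankK ec mul1r.
    by case: (e \in edges K) => //= /eqP; rewrite F2_10.
  apply/matrixP => i j; rewrite !mxE.
  by case ej: (enum_val j \in c) => //=; rewrite ?mul0r // (H _ ej) mulr0.
have -> : (vec c *m Dv == 0) = [forall x, ~~ odd #|[set e in c | x \in e]|].
  apply/eqP/forallP => [H x|H].
    move/matrixP: H => /(_ 0 (enum_rank x)); rewrite !mxE.
    under eq_bigr do rewrite !mxE enum_rankK F2_mulb.
    by rewrite (@sum_enum_val _ (fun e => (e \in c) && (x \in e))); case: odd => //= /eqP; rewrite F2_10.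
  apply/matrixP => i x; rewrite !mxE.
  under eq_bigr do rewrite !mxE F2_mulb.
  by rewrite (@sum_enum_val _ (fun e => (e \in c) && (enum_val x \in e))); move: (H (enum_val x)); case: odd.
split => [[H1 H2]|/andP[H1 H2]]; first by rewrite H1 andbT; apply/forallP.
by split=> // x; exact: (forallP H1 x).
Qed.

Lemma vec_bd2 X : vec X *m Bd = vec (bd2 K (X :&: tris K)).
Proof.
apply/rowP => j; rewrite !mxE.
under eq_bigr do rewrite !mxE F2_mulb.
rewrite (@sum_enum_val _ (fun t => (t \in X) && ((enum_val j \in edges K) && (enum_val j \subset t) && (t \in tris K)))) /bd2 inE.
case E: (enum_val j \in edges K) => /=.
  congr ((odd _)%:R); apply: eq_card => t; rewrite !inE.
  by case: (t \in X); case: (t \in tris K); rewrite ?andbT ?andbF.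
rewrite (_ : [set e | _] = set0) ?cards0 //.
by apply/setP => t; rewrite !inE andbF.
Qed.

Lemma boundaryE c : is_boundary K c <-> (vec c <= Bd)%MS.
Proof.
split => [[T [HT ->]]|/submxP[u Hu]].
  by apply/submxP; exists (vec T); rewrite vec_bd2 (setIidPl HT).
exists (unvec u :&: tris K); split; first exact: subsetIr.
by apply: vec_inj; rewrite Hu -vec_bd2 unvecK.
Qed.

End Cx.
Arguments Bd {V}. Arguments Zk {V}. Arguments Dv {V}. Arguments Ne {V}.

Lemma indep_rank (m n : nat) (A : 'M['F_2]_(m, n)) (Bs : 'M['F_2]_n) :
  (forall u : 'rV_m, (u *m A <= Bs)%MS -> u = 0) <->
  \rank (A + Bs)%MS = (m + \rank Bs)%N.
Proof.
have Hcap := mxrank_sum_cap A Bs.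
have HA := rank_leq_row A.
split => [H|Hr u Hu].
  have fA : row_free A.
    by apply: inj_row_free => v Hv; apply: H; rewrite Hv sub0mx.
  have c0 : (A :&: Bs)%MS == 0.
    apply/rowV0P => v; rewrite sub_capmx => /andP[/submxP[w ->] Hw].
    by rewrite (H w Hw) mul0mx.
  move: Hcap; rewrite (eqP fA); move/eqP: c0 => ->; rewrite mxrank0 addn0 => //.
have [c0 rA] : \rank (A :&: Bs)%MS = 0%N /\ \rank A = m.
  move: Hcap; rewrite Hr; lia.
have fA : row_free A by rewrite /row_free rA.
have : (u *m A <= A :&: Bs)%MS by rewrite sub_capmx submxMl Hu.
move/eqP: c0; rewrite mxrank_eq0 => /eqP ->; rewrite submx0 => /eqP Hu0.
by apply: (row_free_inj fA); rewrite Hu0 mul0mx.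
Qed.

Section Fam.
Variables (V : finType) (K : complex2 V).
Local Notation N := #|{: {set V}}|.
Local Notation chain := (chain V).

Definition Fm {n} (f : 'I_n -> chain) : 'M['F_2]_(n, N) := \matrix_i vec (f i).

Definition supp {n} (u : 'rV['F_2]_n) : {set 'I_n} := [set i | u 0 i != 0].


Lemma mulFm n f (u : 'rV_n) : u *m Fm f = vec (zsum f (supp u)).
Proof.
rewrite mulmx_sum_row vec_zsum [RHS]big_mkcond /=.
apply: eq_bigr => i _; rewrite rowK inE.
by case: (F2_cases (u 0 i)) => ->; rewrite ?scale0r ?scale1r ?F2_10.
Qed.

Lemma supp_ex n (S : {set 'I_n}) : exists u : 'rV_n, supp u = S.
Proof.
exists (\row_i ((i \in S)%:R)); apply/setP => i.
by rewrite inE mxE F2_bool.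
Qed.

Lemma supp0 n (u : 'rV['F_2]_n) : (supp u == set0) = (u == 0).
Proof.
apply/eqP/eqP => [H|->].
  apply/rowP => i; rewrite mxE; apply/eqP; apply: negbNE.
  by rewrite -[_ != 0](in_set (fun i => u 0 i != 0)) -/(supp u) H inE.
by apply/setP => i; rewrite !inE mxE eqxx.
Qed.

Lemma Fm_sum n f : (Fm f :=: \sum_(i < n) <<vec (f i)>>)%MS.
Proof.
apply/eqmxP/andP; split.
  apply/row_subP => i; rewrite rowK.
  by apply: (sumsmx_sup i) => //; rewrite genmxE.
apply/sumsmx_subP => i _; rewrite genmxE.
by rewrite -(rowK (fun i => vec (f i)) i) row_sub.
Qed.

Lemma indep_hb n (f : 'I_n -> chain) :
  (forall S, is_boundary K (zsum f S) -> S = set0) <->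
  \rank (Fm f + Bd K)%MS = (n + \rank (Bd K))%N.
Proof.
rewrite -indep_rank; split => [H u|H S].
  rewrite mulFm -boundaryE => /H /eqP; rewrite supp0; exact/eqP.
have [u <-] := supp_ex _ S; rewrite boundaryE -mulFm => /H ->.
by apply/eqP; rewrite supp0.
Qed.

Lemma indep_cb n (f : 'I_n -> chain) :
  (forall S, zsum f S = set0 -> S = set0) <-> \rank (Fm f) = n.
Proof.
have -> : \rank (Fm f) = \rank (Fm f + (0 : 'M_N))%MS.
  by apply/eqmx_rank/eqmxP/eqmx_sym/addsmx0.
have E := @indep_rank _ _ (Fm f) (0 : 'M['F_2]_N); rewrite mxrank0 addn0 in E; rewrite -E; split => [H u|H S].
  rewrite mulFm submx0 vec_eq0 => /eqP /H /eqP; rewrite supp0; exact/eqP.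
have [u <-] := supp_ex _ S => /eqP; rewrite -vec_eq0 -mulFm -submx0 => /H ->.
by apply/eqP; rewrite supp0.
Qed.

Lemma span_hb n (f : 'I_n -> chain) :
  (forall z, is_cycle K z -> exists S b, is_boundary K b /\ z = cadd (zsum f S) b) <->
  (Zk K <= Fm f + Bd K)%MS.
Proof.
split => [H|H z].
  apply/rV_subP => v; rewrite -[v]unvecK -cycleE => /H [S [b [Hb ->]]].
  rewrite vec_cadd; apply: addmx_sub_adds; last by rewrite -boundaryE.
  by have [u <-] := supp_ex _ S; rewrite -mulFm submxMl.
rewrite cycleE => /(submx_trans) /(_ H) /sub_addsmxP [[u1 u2] /= Hz].
exists (supp u1), (unvec (u2 *m Bd K)); split.
  by rewrite boundaryE unvecK submxMl.
by apply: vec_inj; rewrite vec_cadd unvecK -mulFm.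
Qed.

Lemma span_cb n (f : 'I_n -> chain) :
  (forall z, is_cycle K z -> exists S, z = zsum f S) <-> (Zk K <= Fm f)%MS.
Proof.
split => [H|H z].
  apply/rV_subP => v; rewrite -[v]unvecK -cycleE => /H [S ->].
  by have [u <-] := supp_ex _ S; rewrite -mulFm submxMl.
rewrite cycleE => /(submx_trans) /(_ H) /submxP [u Hz].
by exists (supp u); apply: vec_inj; rewrite -mulFm.
Qed.

Lemma hb_iff n (f : 'I_n -> chain) :
  homology_basis K f <->
  [/\ forall i, (vec (f i) <= Zk K)%MS,
      \rank (Fm f + Bd K)%MS = (n + \rank (Bd K))%N &
      (Zk K <= Fm f + Bd K)%MS].
Proof.
rewrite /homology_basis.
split => [[H1 H2 H3]|[H1 H2 H3]]; split.
- by move=> i; apply/cycleE.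
- exact/indep_hb.
- exact/span_hb.
- by move=> i; apply/cycleE.
- exact/indep_hb.
- exact/span_hb.
Qed.

Lemma cb_iff n (f : 'I_n -> chain) :
  cycle_basis K f <->
  [/\ forall i, (vec (f i) <= Zk K)%MS, \rank (Fm f) = n & (Zk K <= Fm f)%MS].
Proof.
rewrite /cycle_basis.
split => [[H1 H2 H3]|[H1 H2 H3]]; split.
- by move=> i; apply/cycleE.
- exact/indep_cb.
- exact/span_cb.
- by move=> i; apply/cycleE.
- exact/indep_cb.
- exact/span_cb.
Qed.

End Fam.
Arguments Fm {V n}.
Arguments hb_iff {V} K {n} f.
Arguments cb_iff {V} K {n} f.
Arguments indep_hb {V} K {n} f.
Arguments Fm_sum {V n} f.

Section Main.
Variables (V : finType) (K : complex2 V).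
Local Notation N := #|{: {set V}}|.
Local Notation chain := (chain V).

Lemma Fm_sub n (f : 'I_n -> chain) :
  (forall i, (vec (f i) <= Zk K)%MS) -> (Fm f <= Zk K)%MS.
Proof. by move=> H; apply/row_subP => i; rewrite rowK. Qed.

Lemma hb_span {n} {f : 'I_n -> chain} :
  homology_basis K f -> (Fm f + Bd K :=: Zk K + Bd K)%MS.
Proof.
case/hb_iff => H1 H2 H3; apply/eqmxP/andP; split.
  by apply: addsmxS => //; apply: Fm_sub.
by rewrite addsmx_sub H3 addsmxSr.
Qed.

Lemma hb_size {n} {f : 'I_n -> chain} :
  homology_basis K f -> n = (\rank (Zk K + Bd K) - \rank (Bd K))%N.
Proof.
move=> H; have := H; case/hb_iff => _ H2 _.
rewrite -(eqmx_rank (introT eqmxP (hb_span H))) H2; lia.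
Qed.

Lemma Fm_ext {n} {f g : 'I_n -> chain} : f =1 g -> Fm f = Fm g.
Proof. by move=> H; apply/matrixP => i j; rewrite !mxE H. Qed.

Lemma hb_ext n (f g : 'I_n -> chain) : f =1 g ->
  homology_basis K f -> homology_basis K g.
Proof.
move=> H; rewrite !hb_iff (Fm_ext H) => -[H1 H2 H3]; split => // i.
by rewrite -H.
Qed.

Lemma hb_exists : exists h (f : 'I_h -> chain), homology_basis K f.
Proof.
pose X := (Zk K :\: Bd K)%MS.
pose RB := row_base X.
exists (\rank X), (fun i => unvec (row i RB)).
have FmE : Fm (fun i => unvec (row i RB)) = RB.
  by apply/row_matrixP => i; rewrite rowK unvecK.
apply/hb_iff; rewrite FmE; split.
- move=> i; rewrite unvecK; apply: submx_trans (row_sub i RB) _.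
  by rewrite eq_row_base diffmxSl.
- have := mxrank_sum_cap RB (Bd K).
  rewrite (eqmx_rank (introT eqmxP (cap_eqmx (eq_row_base X) (eqmx_refl (Bd K))))).
  by rewrite capmx_diff mxrank0 addn0 (eqmx_rank (introT eqmxP (eq_row_base X))).
- rewrite -{1}(addsmx_diff_cap_eq (Zk K) (Bd K)).
  by apply: addsmxS; rewrite ?eq_row_base ?capmxSr.
Qed.

Variables (R : realFieldType) (w : {set V} -> R).

Lemma min_hb_exists : exists h (C : 'I_h -> chain), min_homology_basis K w C.
Proof.
have [h [f0 Hf0]] := hb_exists.
pose P (F : {ffun 'I_h -> chain}) : bool :=
  [&& [forall i, (vec (F i) <= Zk K)%MS],
      \rank (Fm F + Bd K)%MS == (h + \rank (Bd K))%N &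
      (Zk K <= Fm F + Bd K)%MS].
have PE F : P F <-> homology_basis K F.
  rewrite hb_iff /P; split => [/and3P[/forallP H1 /eqP H2 H3]|[H1 H2 H3]] //.
  by apply/and3P; split => //; [apply/forallP | apply/eqP].
have P0 : P (finfun f0) by apply/PE; apply: hb_ext Hf0 => i; rewrite ffunE.
case: (arg_minP (fun F : {ffun 'I_h -> chain} => total_size w F) P0) => C /PE HC Hmin.
exists h, C; split => // m f' Hf'.
have Em : m = h by rewrite (hb_size Hf') (hb_size HC).
subst m.
have Hf'' : P (finfun f') by apply/PE; apply: hb_ext Hf' => i; rewrite ffunE.
apply: le_trans (Hmin _ Hf'') _.
by rewrite /total_size; under eq_bigr do rewrite ffunE.
Qed.

End Main.
Arguments min_hb_exists {V} K {R} w.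
Arguments hb_span {V K n f}.

Lemma perm_big_nth (T : Type) (idx : T) (op : Monoid.com_law idx) (X : Type) (x0 : X)
   g (C : 'I_g -> X) (s : seq 'I_g) (Hs : perm_eq s (enum 'I_g)) (F : X -> T) :
 \big[op/idx]_(i < g) F (nth x0 (map C s) i) = \big[op/idx]_(j < g) F (C j).
Proof.
have Hsz : size (map C s) = g by rewrite size_map (perm_size Hs) size_enum_ord.
rewrite -(big_mkord xpredT (fun i => F (nth x0 (map C s) i))) -{1}Hsz.
by rewrite -(big_nth x0 xpredT F) big_map (perm_big _ Hs) big_enum.
Qed.

Section Sort.
Variables (V : finType) (K : complex2 V).
Local Notation N := #|{: {set V}}|.
Local Notation chain := (chain V).
Variables (R : realFieldType) (w : {set V} -> R).

Lemma sort_family g (C : 'I_g -> chain) : min_homology_basis K w C ->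
  exists c : nat -> chain, min_homology_basis K w (fun i : 'I_g => c i) /\
    (forall i j, (i <= j)%N -> (j < g)%N -> csize w (c i) <= csize w (c j)).
Proof.
move=> [HC Hmin].
pose le := fun i j : 'I_g => csize w (C i) <= csize w (C j).
pose s := sort le (enum 'I_g).
have Hs : perm_eq s (enum 'I_g) by rewrite /s perm_sort.
pose c := fun n => nth set0 (map C s) n.
have Hsz : size (map C s) = g by rewrite size_map (perm_size Hs) size_enum_ord.
exists c; split; last first.
  move=> i j ij jg.
  have Hsort : sorted (fun x y => csize w x <= csize w y) (map C s).
    by rewrite sorted_map; apply: sort_sorted => x y; apply: le_total.
  have tr : transitive (fun x y : chain => csize w x <= csize w y).
    by move=> y x z; apply: le_trans.
  apply: (sorted_leq_nth tr (fun x => lexx (csize w x)) set0 Hsort); rewrite ?inE ?Hsz //.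
  exact: leq_ltn_trans ij jg.
have Htot : total_size w (fun i : 'I_g => c i) = total_size w C.
  exact: perm_big_nth.
have E : (Fm (fun i : 'I_g => c i) :=: Fm C)%MS.
  apply: eqmx_trans (@Fm_sum _ _ (fun i : 'I_g => c i)) _; apply: eqmx_sym; apply: eqmx_trans (@Fm_sum _ _ C) _.
  by rewrite (@perm_big_nth _ _ _ _ set0 _ C s Hs (fun x => <<vec x>>%MS)); apply: eqmx_refl.
split => [|m f' Hf']; last by rewrite Htot; apply: Hmin.
case/hb_iff: HC => H1 H2 H3; apply/hb_iff; split.
- move=> i; have : c i \in map C s by apply: mem_nth; rewrite Hsz.
  by case/mapP => j _ ->.
- by rewrite (eqmx_rank (introT eqmxP (adds_eqmx E (eqmx_refl (Bd K))))).
- by rewrite (adds_eqmx E (eqmx_refl (Bd K))).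
Qed.

End Sort.
Arguments sort_family {V K R w g C}.

Section Claim.
Variables (V : finType) (K : complex2 V).
Local Notation N := #|{: {set V}}|.
Local Notation chain := (chain V).
Variables (R : realFieldType) (w : {set V} -> R).

Lemma claimK L (G : 'I_L -> chain) : min_cycle_basis K w G ->
  forall z t, is_cycle K z -> csize w z <= t ->
  (vec z <= \sum_(j | (csize w (G j) <= t)%R) <<vec (G j)>>)%MS.
Proof.
case=> HG Hmin z t Hz Hzt.
have [H1 H2 H3] := (cb_iff K G).1 HG.
have : (vec z <= Fm G)%MS by apply: submx_trans H3; apply/cycleE.
case/submxP => u; rewrite mulFm vec_zsum; set S := supp u => Hu.
case E: [exists j in S, t < csize w (G j)]; last first.
  move/negbT/exists_inPn: E => E.
  rewrite Hu; apply: summx_sub => j jS; apply: (sumsmx_sup j).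
    by rewrite leNgt; apply: E.
  by rewrite genmxE.
case/exists_inP: E => j0 j0S Hj0.
pose G' := fun j => if j == j0 then z else G j.
have sub1 : (Fm G' <= Fm G)%MS.
  apply/row_subP => j; rewrite rowK /G'; case: eqP => _.
    by rewrite Hu; apply: summx_sub => i _; rewrite -(rowK (fun i => vec (G i)) i) row_sub.
  by rewrite -(rowK (fun i => vec (G i)) j) row_sub.
have rowG' j : j != j0 -> (vec (G j) <= Fm G')%MS.
  move=> /negPf jj0; have : vec (G' j) = vec (G j) by rewrite /G' jj0.
  by move=> <-; rewrite -(rowK (fun i => vec (G' i)) j) row_sub.
have sub2 : (Fm G <= Fm G')%MS.
  apply/row_subP => j; rewrite rowK; case: (eqVneq j j0) => [->|]; last exact: rowG'.
  have -> : vec (G j0) = vec z - \sum_(i in S | i != j0) vec (G i).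
    by rewrite Hu (bigD1 j0) //= addrK.
  apply: addmx_sub.
    have : vec (G' j0) = vec z by rewrite /G' eqxx.
    by move=> <-; rewrite -(rowK (fun i => vec (G' i)) j0) row_sub.
  rewrite (eqmx_opp _); apply: summx_sub => i /andP[_]; exact: rowG'.
have EG : (Fm G' :=: Fm G)%MS by apply/eqmxP; rewrite sub1 sub2.
have HG' : cycle_basis K G'.
  apply/cb_iff; split.
  - by move=> j; rewrite /G'; case: eqP => _; [apply/cycleE | apply: H1].
  - by rewrite (eqmx_rank (introT eqmxP EG)).
  - by rewrite EG.
have := Hmin _ _ HG'; rewrite /total_size (bigD1 j0) //= [X in _ <= X](bigD1 j0) //=.
rewrite /G' eqxx.
rewrite [X in _ <= _ + X](eq_bigr (fun i => csize w (G i))); last by move=> i /negPf ->.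
rewrite lerD2r => Hle.
have := le_lt_trans (le_trans Hle Hzt) Hj0; by rewrite ltxx.
Qed.

End Claim.
Arguments claimK {V K R w L G} _ {z t}.

Lemma rank_add_vec (n m : nat) (M : 'M['F_2]_(m, n)) (v : 'rV_n) :
  ~~ (v <= M)%MS -> \rank (M + <<v>>)%MS = (\rank M).+1.
Proof.
move=> Hv.
have v0 : v != 0 by apply: contra Hv => /eqP ->; rewrite sub0mx.
have := mxrank_sum_cap M <<v>>%MS; rewrite mxrank_gen rank_rV v0.
have Hle := mxrank_leqif_eq (capmxSr M <<v>>%MS).
have le1 := mxrankS (capmxSr M <<v>>%MS); rewrite mxrank_gen rank_rV v0 in le1.
case E: (\rank (M :&: <<v>>)%MS == 1)%N.
  move: (Hle.2); rewrite mxrank_gen rank_rV v0 E => /esym/eqmxP H.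
  exfalso; move/negP: Hv; apply; apply: submx_trans (capmxSl M <<v>>%MS).
  by rewrite H genmxE.
have -> : \rank (M :&: <<v>>)%MS = 0%N by move/negbT: E; lia.
lia.
Qed.

Lemma zsum_F2 (V : finType) (G : {set chain V}) : zsumset G = zsum (fun x => x) G.
Proof. by []. Qed.

Theorem lemma1 (R : realFieldType) (V : finType) (K : complex2 V)
  (w : {set V} -> R)
  (hw : forall e, e \in edges K -> 0 <= w e)
  (G' : {set chain V})
  (hG' : forall c, c \in G' -> is_cycle K c)
  (hGamma : exists (L : nat) (Gs : 'I_L -> chain V),
     min_cycle_basis K w Gs /\
     forall i : 'I_L, exists Gi : {set chain V},
       [/\ Gi \subset G', Gs i = zsumset Gi &
           forall c, c \in Gi -> csize w c <= 2 * csize w (Gs i)]) :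
  exists (g : nat) (C : 'I_g -> chain V),
    min_homology_basis K w C /\
    exists A : 'I_g -> chain V,
      [/\ forall i, A i \in G',
          homology_basis K A &
          forall i, csize w (A i) <= 2 * csize w (C i)].
Proof.
case: hGamma => L [Gs [HGmin HGi]].
have [h [C0 HC0]] := min_hb_exists K w.
have [c [HC Hsort]] := sort_family HC0.
exists h, (fun i => c i); split => //.
have HChb := HC.1; have := HChb; case/hb_iff => C1 C2 C3.
have ccyc i : (i < h)%N -> is_cycle K (c i).
  by move=> ih; apply/cycleE; apply: (C1 (Ordinal ih)).
have F1 i k : (i <= k)%N -> (k < h)%N ->
  (vec (c i) <= \sum_(x | (x \in G') && (csize w x <= 2 * csize w (c k))%R) <<vec x>>)%MS.
  move=> ik kh.
  apply: submx_trans (claimK HGmin (ccyc i (leq_ltn_trans ik kh)) (Hsort i k ik kh)) _.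
  apply/sumsmx_subP => j Hj; rewrite genmxE.
  have [Gi [Gsub GE Gb]] := HGi j.
  rewrite GE zsum_F2 vec_zsum; apply: summx_sub => x xGi.
  apply: (sumsmx_sup x); last by rewrite genmxE.
  rewrite (subsetP Gsub _ xGi) /=; apply: le_trans (Gb x xGi) _.
  by rewrite ler_pM2l ?ltr0n.
have F2 k : (k < h)%N ->
  \rank (\sum_(i < k.+1) <<vec (c i)>> + Bd K)%MS = (k.+1 + \rank (Bd K))%N.
  move=> kh.
  pose f' := fun i : 'I_k.+1 => c i.
  have Hind : forall S : {set 'I_k.+1}, is_boundary K (zsum f' S) -> S = set0.
    move=> S; rewrite boundaryE vec_zsum.
    have inj : {in S &, injective (widen_ord kh)}.
      by move=> x y _ _ H; apply: val_inj; exact: (congr1 val H).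
    rewrite -(big_imset (fun j => vec (c (val j))) inj) /= -vec_zsum -boundaryE.
    have [_ Hi _] := (hb_iff K (fun i : 'I_h => c i)).2 (And3 C1 C2 C3).
    by move=> /Hi /eqP; rewrite imset_eq0 => /eqP.
  have := (indep_hb K f').1 Hind.
  by rewrite (eqmx_rank (introT eqmxP (adds_eqmx (Fm_sum f') (eqmx_refl (Bd K))))).
have Greedy k : (k <= h)%N -> exists a : nat -> chain V,
    (forall i, (i < k)%N -> a i \in G' /\ csize w (a i) <= 2 * csize w (c i)) /\
    \rank (\sum_(i < k) <<vec (a i)>> + Bd K)%MS = (k + \rank (Bd K))%N.
  elim: k => [_|k IH kh].
    exists (fun _ => set0); split => // ; rewrite big_ord0.
    by rewrite (eqmx_rank (introT eqmxP (adds0mx _ (Bd K)))).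
  have [a [Ha Hr]] := IH (ltnW kh).
  set Ak := (\sum_(i < k) <<vec (a i)>>)%MS in Hr.
  set t := csize w (c k).
  case E: [exists x, [&& x \in G', (csize w x <= 2 * t)%R & ~~ (vec x <= Ak + Bd K)%MS]]; last first.
    exfalso.
    have Hx : forall x, x \in G' -> (csize w x <= 2 * t)%R -> (vec x <= Ak + Bd K)%MS.
      move=> x xG xt; apply/negPn; apply: contraFN E => Hn.
      by apply/existsP; exists x; rewrite xG xt Hn.
    have : (\sum_(i < k.+1) <<vec (c i)>> + Bd K <= Ak + Bd K)%MS.
      rewrite addsmx_sub addsmxSr andbT.
      apply/sumsmx_subP => i _; rewrite genmxE.
      apply: submx_trans (F1 i k _ kh) _; first by rewrite -ltnS.
      apply/sumsmx_subP => x /andP[xG xt]; rewrite genmxE; exact: Hx.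
    move/mxrankS; rewrite (F2 k kh) Hr; lia.
  case/existsP: E => x /and3P[xG xt xn].
  exists (fun n => if n == k then x else a n); split.
    move=> i; rewrite ltnS leq_eqVlt; case: eqP => [-> _|_ /= ik]; first by split.
    exact: Ha.
  rewrite big_ord_recr /= eqxx.
  rewrite (eq_bigr (fun i : 'I_k => <<vec (a i)>>%MS)); last first.
    by move=> i _; rewrite ifN // neq_ltn ltn_ord.
  rewrite -/Ak -addsmxA (addsmxC _ (Bd K)) addsmxA rank_add_vec // Hr.
  by rewrite addSn.
have [a [Ha Hr]] := Greedy h (leqnn h).
exists (fun i => a i); split.
- by move=> i; case: (Ha i (ltn_ord i)).
- apply/hb_iff.
  have Ha1 (i : 'I_h) : (vec (a i) <= Zk K)%MS.
    by apply/cycleE; apply: hG'; case: (Ha i (ltn_ord i)).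
  have Hr' : \rank (Fm (fun i : 'I_h => a i) + Bd K)%MS = (h + \rank (Bd K))%N.
    by rewrite (eqmx_rank (introT eqmxP (adds_eqmx (Fm_sum _) (eqmx_refl (Bd K))))).
  split => //.
  have Hsub : (Fm (fun i : 'I_h => a i) + Bd K <= Zk K + Bd K)%MS.
    by apply: addsmxS => //; apply: Fm_sub.
  have Hrk : \rank (Zk K + Bd K)%MS = (h + \rank (Bd K))%N.
    by rewrite -(eqmx_rank (introT eqmxP (hb_span HChb))).
  have := mxrank_leqif_eq Hsub; rewrite Hr' Hrk => /leqif_refl /eqmxP EE.
  by rewrite EE addsmxSl.
- by move=> i; case: (Ha i (ltn_ord i)).
Qed.
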